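(* There exists a randomized $O(k^2\log k)$-competitive online algorithm for the generalized $k$-server problem in uniform metrics; that is, there is an absolute constant $C$ such that for every $k\ge 2$ and all uniform metrics $M_1,\dots,M_k$ there is a randomized online algorithm which is $C k^2\log k$-competitive.
   Context: Generalized $k$-server problem in uniform metrics: given uniform metric spaces $M_1,\dots,M_k$, where $M_i$ has $n_i\ge 2$ points at pairwise distance $1$, server $s_i$ starts at a fixed point of $M_i$ and always stays in $M_i$. Requests arrive online as $k$-tuples $(r_1,\dots,r_k)\in\prod_i M_i$; to serve a request an algorithm moves servers so that $s_i$ is at $r_i$ for at least one $i$, before seeing the next request. The cost is the total distance traveled by all servers. A randomized online algorithm $\mathrm{ALG}$ is $\beta$-competitive if there is a constant $\gamma$ (possibly depending on $k$ but not on the request sequence) such that for every input $I$, $\mathbf{E}[\mathrm{ALG}(I)]\le \beta\cdot\mathrm{OPT}(I)+\gamma$, where $\mathrm{OPT}(I)$ is the optimal offline cost. *)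

(* Defs.v *)
From HB Require Import structures.
From mathcomp Require Import all_boot all_order all_algebra.
From mathcomp Require Import all_classical all_reals all_analysis.
Set Implicit Arguments. Unset Strict Implicit. Unset Printing Implicit Defensive.
Import Order.TTheory GRing.Theory Num.Theory.
Local Open Scope ring_scope.

(* Generalized k-server in uniform metrics.
   n i = number of points of the uniform metric M_i, points are 'I_(n i).
   A configuration (and also a request) is a k-tuple in prod_i M_i. *)
Definition config (k : nat) (n : 'I_k -> nat) : finType :=
  {dffun forall i : 'I_k, 'I_(n i)}.

(* distance travelled when moving from configuration c to c':
   each server whose position changes travels distance 1 *)
Definition dist (k : nat) (n : 'I_k -> nat) (c c' : config n) : nat :=
  #|[set i : 'I_k | c i != c' i]|.

Definition serves (k : nat) (n : 'I_k -> nat) (c r : config n) : bool :=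
  [exists i : 'I_k, c i == r i].

Fixpoint path_cost (k : nat) (n : 'I_k -> nat) (s0 : config n)
  (cs : seq (config n)) : nat :=
  if cs is c :: cs' then (dist s0 c + path_cost c cs')%N else 0%N.

Definition feasible (k : nat) (n : 'I_k -> nat) (I cs : seq (config n)) : bool :=
  all2 (fun c r => serves c r) cs I.

(* The default value [size I] of the big minimum is irrelevant:
   moving one server per request is feasible with cost <= size I. *)
Definition OPT (k : nat) (n : 'I_k -> nat) (s0 : config n) (I : seq (config n))
  : nat :=
  \big[minn/size I]_(t : (size I).-tuple (config n) | feasible I t)
     path_cost s0 t.

(* A randomized online algorithm (behavioural form): given the requests seen so
   far (including the current one) and its own past configurations (starting
   with the initial one), it outputs a probability distribution over the next
   configuration. *)
Definition ralg (R : realType) (k : nat) (n : 'I_k -> nat) :=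
  seq (config n) -> seq (config n) -> {ffun config n -> R}.

Definition valid_ralg (R : realType) (k : nat) (n : 'I_k -> nat)
  (A : ralg R n) : Prop :=
  (forall hr hc c, 0 <= A hr hc c) /\
  (forall hr hc, \sum_(c : config n) A hr hc c = 1) /\
  (forall hr r hc c, A (rcons hr r) hc c != 0 -> serves c r).

(* Expected total cost of A on the remaining requests [rest], given the
   history of requests [hr] and of own configurations [hc] (current = last). *)
Fixpoint ecost (R : realType) (k : nat) (n : 'I_k -> nat) (A : ralg R n)
  (s0 : config n) (hr hc rest : seq (config n)) : R :=
  if rest is r :: rest' then
    \sum_(c : config n) A (rcons hr r) hc c *
       ((dist (last s0 hc) c)%:R + ecost A s0 (rcons hr r) (rcons hc c) rest')
  else 0.

Definition expected_cost (R : realType) (k : nat) (n : 'I_k -> nat)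
  (A : ralg R n) (s0 : config n) (I : seq (config n)) : R :=
  ecost A s0 [::] [:: s0] I.

Definition competitive (R : realType) (k : nat) (n : 'I_k -> nat)
  (A : ralg R n) (s0 : config n) (beta : R) : Prop :=
  exists gamma : R, forall I : seq (config n),
    expected_cost A s0 I <= beta * (OPT s0 I)%:R + gamma.

(* Main.v *)
Require Import Defs.
From HB Require Import structures.
From mathcomp Require Import all_boot all_order all_algebra.
From mathcomp Require Import all_classical all_reals all_analysis.
From mathcomp Require Import fingroup perm.
From mathcomp Require Import zify.
From mathcomp Require Import lra.
Import Order.TTheory GRing.Theory Num.Theory.
Set Implicit Arguments. Unset Strict Implicit. Unset Printing Implicit Defensive.
Local Open Scope ring_scope.

Definition gstep (k : nat) (n : 'I_k -> nat) (Om : Type)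
  (nxt : Om -> seq (config n) -> seq (config n) -> config n) (w : Om)
  (acc : seq (config n) * seq (config n)) (r : config n) :=
  (rcons acc.1 r, rcons acc.2 (nxt w (rcons acc.1 r) acc.2)).

Definition ghist (k : nat) (n : 'I_k -> nat) (Om : Type)
  (nxt : Om -> seq (config n) -> seq (config n) -> config n) (s0 : config n)
  (w : Om) (hr : seq (config n)) :=
  foldl (gstep nxt w) ([::], [:: s0]) hr.

Lemma ghist_fst (k : nat) (n : 'I_k -> nat) (Om : Type) nxt s0 (w : Om) hr :
  (@ghist k n Om nxt s0 w hr).1 = hr.
Proof.
elim/last_ind: hr => [|hr r IH] //.
by rewrite /ghist foldl_rcons /= -/(ghist _ _ _ _) IH.
Qed.

Lemma ghist_rcons (k : nat) (n : 'I_k -> nat) (Om : Type) nxt s0 (w : Om) hr r :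
  (@ghist k n Om nxt s0 w (rcons hr r)).2 =
  rcons (ghist nxt s0 w hr).2 (nxt w (rcons hr r) (ghist nxt s0 w hr).2).
Proof.
by rewrite /ghist foldl_rcons /= -/(ghist _ _ _ _) ghist_fst.
Qed.

Definition gcons (k : nat) (n : 'I_k -> nat) (Om : finType)
  (nxt : Om -> seq (config n) -> seq (config n) -> config n) (s0 : config n)
  (hr hc : seq (config n)) : {set Om} :=
  [set w | (ghist nxt s0 w hr).2 == hc].

Definition galg (R : realType) (k : nat) (n : 'I_k -> nat) (Om : finType)
  (nxt : Om -> seq (config n) -> seq (config n) -> config n) (s0 : config n)
  (w0 : Om) : ralg R n :=
  fun hr' hc => [ffun c =>
    if hr' is [::] then (c == s0)%:R else
    let S := gcons nxt s0 (take (size hr').-1 hr') hc in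
    if #|S| == 0%N then (c == nxt w0 hr' hc)%:R
    else #|[set w in S | nxt w hr' hc == c]|%:R / #|S|%:R].

Fixpoint gcont (k : nat) (n : 'I_k -> nat) (Om : Type)
  (nxt : Om -> seq (config n) -> seq (config n) -> config n) (w : Om)
  (hr hc rest : seq (config n)) : seq (config n) :=
  if rest is r :: rest' then
    let c := nxt w (rcons hr r) hc in c :: gcont nxt w (rcons hr r) (rcons hc c) rest'
  else [::].

Lemma take_rcons_size (T : Type) (s : seq T) x : take (size (rcons s x)).-1 (rcons s x) = s.
Proof. by rewrite size_rcons /= -cats1 take_size_cat. Qed.

Lemma galgE (R : realType) (k : nat) (n : 'I_k -> nat) (Om : finType) nxt s0 (w0 : Om) hr r hc c :
  @galg R k n Om nxt s0 w0 (rcons hr r) hc c =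
    let S := gcons nxt s0 hr hc in
    if #|S| == 0%N then (c == nxt w0 (rcons hr r) hc)%:R
    else #|[set w in S | nxt w (rcons hr r) hc == c]|%:R / #|S|%:R.
Proof.
rewrite /galg ffunE take_rcons_size.
by case: hr => [|? ?].
Qed.

Lemma gcons_rcons (k : nat) (n : 'I_k -> nat) (Om : finType) nxt s0 hr r hc c :
  @gcons k n Om nxt s0 (rcons hr r) (rcons hc c) =
  [set w in gcons nxt s0 hr hc | nxt w (rcons hr r) hc == c].
Proof.
apply/setP => w; rewrite !inE ghist_rcons eqseq_rcons.
case E: ((ghist nxt s0 w hr).2 == hc) => //=.
by rewrite (eqP E).
Qed.

Lemma galg_valid (R : realType) (k : nat) (n : 'I_k -> nat) (Om : finType) nxt s0 (w0 : Om) :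
  (forall w hr r hc, serves (nxt w (rcons hr r) hc) r) ->
  valid_ralg (@galg R k n Om nxt s0 w0).
Proof.
move=> Hs; split; [|split].
- move=> hr hc c; case/lastP: hr => [|hr r].
    by rewrite /galg ffunE.
  rewrite galgE /=; case: ifP => // _.

- move=> hr hc; case/lastP: hr => [|hr r].
  + rewrite (eq_bigr (fun c => (c == s0)%:R)); last by move=> c _; rewrite /galg ffunE.
    by rewrite (bigD1 s0) //= eqxx big1 ?addr0 // => c /negbTE ->.
  + rewrite (eq_bigr (fun c => @galg R k n Om nxt s0 w0 (rcons hr r) hc c)) //.
    under eq_bigr do rewrite galgE /=.
    have [S0|S0] := eqVneq #|gcons nxt s0 hr hc| 0%N.
    * by rewrite (bigD1 (nxt w0 (rcons hr r) hc)) //= eqxx big1 ?addr0 // => c; rewrite eq_sym => /negbTE ->.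
    * rewrite -mulr_suml -natr_sum.
      have -> : (\sum_(c : config n) #|[set w in gcons nxt s0 hr hc | nxt w (rcons hr r) hc == c]|)%N
         = #|gcons nxt s0 hr hc|.
        rewrite -sum1_card (partition_big (fun w => nxt w (rcons hr r) hc) xpredT) //=.
        apply: eq_bigr => c _; rewrite -sum1_card; apply: eq_bigl => w.
        by rewrite inE.
      by rewrite mulfV // pnatr_eq0.
- move=> hr r hc c; rewrite galgE /=.
  case: ifP => _.
  + have [->|_] := eqVneq c (nxt w0 (rcons hr r) hc); first by rewrite Hs.
    by rewrite eqxx.
  + case: (set_0Vmem [set w in gcons nxt s0 hr hc | nxt w (rcons hr r) hc == c]) => [->|[w]].
    * by rewrite cards0 mul0r eqxx.
    * by rewrite inE => /andP[_ /eqP <-] _.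
Qed.

Lemma galg_ecost (R : realType) (k : nat) (n : 'I_k -> nat) (Om : finType) nxt s0 (w0 : Om) rest :
  forall hr hc, (0 < #|gcons nxt s0 hr hc|)%N ->
  ecost (@galg R k n Om nxt s0 w0) s0 hr hc rest * #|gcons nxt s0 hr hc|%:R =
  \sum_(w in gcons nxt s0 hr hc) (path_cost (last s0 hc) (gcont nxt w hr hc rest))%:R.
Proof.
elim: rest => [|r rest IH] hr hc Spos /=.
  by rewrite mul0r big1.
set S := gcons nxt s0 hr hc.
have HS c : @galg R k n Om nxt s0 w0 (rcons hr r) hc c * #|S|%:R =
            #|gcons nxt s0 (rcons hr r) (rcons hc c)|%:R.
  rewrite galgE /= -/S; case: eqP => [S0|_]; first by rewrite S0 in Spos.
  by rewrite gcons_rcons -mulrA mulVf ?mulr1 // pnatr_eq0 -lt0n.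
rewrite mulr_suml.
have HF c : #|gcons nxt s0 (rcons hr r) (rcons hc c)|%:R *
   ((dist (last s0 hc) c)%:R + ecost (galg R nxt s0 w0) s0 (rcons hr r) (rcons hc c) rest)
   = \sum_(w in gcons nxt s0 (rcons hr r) (rcons hc c))
       ((dist (last s0 hc) c)%:R + (path_cost c (gcont nxt w (rcons hr r) (rcons hc c) rest))%:R) :> R.
  have [S0|Sp] := posnP #|gcons nxt s0 (rcons hr r) (rcons hc c)|.
    rewrite S0 mul0r big1 // => w wS.
    by move/card0_eq: S0 => /(_ w); rewrite wS.
  rewrite big_split /= mulrDr; congr (_ + _).
    by rewrite sumr_const mulr_natl.
  by rewrite mulrC IH // last_rcons.
rewrite (eq_bigr (fun c => \sum_(w in gcons nxt s0 (rcons hr r) (rcons hc c))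
       ((dist (last s0 hc) c)%:R + (path_cost c (gcont nxt w (rcons hr r) (rcons hc c) rest))%:R))); last first.
  by move=> c _; rewrite mulrAC HS HF.
rewrite (partition_big (fun w => nxt w (rcons hr r) hc) xpredT) //=.
apply: eq_bigr => c _; apply: eq_big => w.
  by rewrite gcons_rcons inE.
by rewrite gcons_rcons inE => /andP[_ /eqP ->]; rewrite natrD.
Qed.

Section Alg.
Variables (k : nat) (n : 'I_k -> nat) (s0 : config n).

Definition Slot := {ffun 'I_k -> 'I_k}.

Definition setc (g : config n) (p : 'I_k) (r : config n) : config n :=
  [ffun i => if i == p then r i else g i].

Definition over (s : Slot) (c : config n) (d : nat) (g : config n) : config n :=
  [ffun i => if [exists j : 'I_k, (j < d)%N && (s j == i)] then g i else c i].

Definition stepN (s : Slot) (st : option (nat * config n)) (r : config n) :=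
  if st is Some (d, g) then
    if [exists j : 'I_k, (j < d)%N && (g (s j) == r (s j))] then st
    else if [pick j : 'I_k | val j == d] is Some j then Some (d.+1, setc g (s j) r)
    else None
  else None.

Definition run (s : Slot) (ps : seq (config n)) := foldl (stepN s) (Some (0%N, s0)) ps.

Definition alive (s : Slot) ps := run s ps != None.

Lemma run_rcons s ps r : run s (rcons ps r) = stepN s (run s ps) r.
Proof. by rewrite /run foldl_rcons. Qed.

Lemma alive_rcons s ps r : alive s (rcons ps r) -> alive s ps.
Proof. by rewrite /alive run_rcons; case: (run s ps). Qed.

Lemma run_dk s ps d g : run s ps = Some (d, g) -> (d <= k)%N.
Proof.
elim/last_ind: ps d g => [|ps r IH] d g; first by case=> <- _.
rewrite run_rcons; case E: (run s ps) => [[d0 g0]|] //=.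
case: ifP => _; first by case=> <- _; exact: IH E.
case: pickP => // j /eqP jd [<- _]; rewrite -jd; exact: ltn_ord.
Qed.

Lemma run_match s ps r d g : run s (rcons ps r) = Some (d, g) ->
  [exists j : 'I_k, (j < d)%N && (g (s j) == r (s j))].
Proof.
rewrite run_rcons; case: (run s ps) => [[d0 g0]|] //=.
case: ifP => [H [<- <-]|_]; first by [].
case: pickP => // j /eqP jd [<- <-].
apply/existsP; exists j; rewrite jd ltnSn /= /setc ffunE eqxx //.
Qed.

Lemma over_idem s c d g : over s (over s c d g) d g = over s c d g.
Proof. by apply/ffunP => i; rewrite /over !ffunE; case: [exists j, _]. Qed.

Lemma over_serves s c ps r d g : run s (rcons ps r) = Some (d, g) ->
  serves (over s c d g) r.
Proof.
move/run_match/existsP => [j /andP[jd /eqP e]].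
apply/existsP; exists (s j); rewrite ffunE.
have -> : [exists j0 : 'I_k, (j0 < d)%N && (s j0 == s j)].
  by apply/existsP; exists j; rewrite jd eqxx.
by rewrite e.
Qed.

Definition stepP (P : seq (config n)) r :=
  if [exists s : Slot, alive s (rcons P r)] then rcons P r else [:: r].

Definition phase (hr : seq (config n)) := foldl stepP [::] hr.

Lemma phase_rcons hr r : phase (rcons hr r) = stepP (phase hr) r.
Proof. by rewrite /phase foldl_rcons. Qed.

Definition isreset hr r := ~~ [exists s : Slot, alive s (rcons (phase hr) r)].

Definition Aset hr := [set s : Slot | alive s (phase hr)].

Lemma alive_single (k0 : (0 < k)%N) s r : alive s [:: r].
Proof.
rewrite /alive /run /= /stepN.
have -> : [exists j : 'I_k, (j < 0)%N && (s0 (s j) == r (s j))] = false.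
  by apply/existsP => [[j]].
by case: pickP => // /(_ (Ordinal k0)) /=; rewrite eqxx.
Qed.

Lemma Aset_nonempty (k0 : (0 < k)%N) hr : exists s, s \in Aset hr.
Proof.
case/lastP: hr => [|hr r].
  by exists [ffun i => i]; rewrite inE.
rewrite /Aset phase_rcons /stepP.
case: ifP => [/existsP [s Hs]|_]; first by exists s; rewrite inE.
by exists [ffun i => i]; rewrite inE; apply: alive_single.
Qed.

Definition sdef : Slot := [ffun i => i].

Definition first (rho : {perm Slot}) (A : {set Slot}) :=
  head sdef [seq x <- [seq rho y | y <- enum Slot] | x \in A].

Lemma head_filter_in (T : eqType) (a : pred T) d l : has a l -> a (head d (seq.filter a l)).
Proof. by elim: l => //= x l IH; case: ifP => //= _ /IH. Qed.

Lemma first_in rho A : A != finset.set0 -> first rho A \in A.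
Proof.
case/set0Pn => x xA.
rewrite /first.
have : has (mem A) [seq rho y | y <- enum Slot].
  apply/hasP; exists x => //; apply/mapP; exists (rho^-1 x)%g.
    by rewrite mem_enum.
  by rewrite permKV.
exact: head_filter_in.
Qed.

Definition chosen rho hr := first rho (Aset hr).

Definition st rho hr := odflt (0%N, s0) (run (chosen rho hr) (phase hr)).

Definition nxt (rho : {perm Slot}) (hr hc : seq (config n)) : config n :=
  over (chosen rho hr) (last s0 hc) (st rho hr).1 (st rho hr).2.

Lemma Aset_neq0 (k0 : (0 < k)%N) hr : Aset hr != finset.set0.
Proof. by case: (Aset_nonempty k0 hr) => s Hs; apply/set0Pn; exists s. Qed.

Lemma nxt_serves (k0 : (0 < k)%N) rho hr r hc : serves (nxt rho (rcons hr r) hc) r.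
Proof.
have := first_in rho (Aset_neq0 k0 (rcons hr r)).
rewrite /nxt /st -/(chosen rho (rcons hr r)) inE /alive.
have [P ->] : exists P, phase (rcons hr r) = rcons P r.
  rewrite phase_rcons /stepP; case: ifP => _; first by eexists.
  by exists [::].
case E: run => [[d g]|] // _ /=.
exact: over_serves E.
Qed.


Lemma pick_ord d (dk : (d < k)%N) : [pick j : 'I_k | val j == d] = Some (Ordinal dk).
Proof.
case: pickP => [j /eqP jd|/(_ (Ordinal dk))]; last by rewrite /= eqxx.
by congr Some; apply: val_inj.
Qed.

Lemma inv_ex c ps : all (serves c) ps -> exists s d g,
  [/\ run s ps = Some (d, g),
      (forall j : 'I_k, (j < d)%N -> g (s j) = c (s j)),
      (forall j j' : 'I_k, (j < d)%N -> (j' < d)%N -> s j = s j' -> j = j') &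
      (forall s' : Slot, (forall j : 'I_k, (j < d)%N -> s' j = s j) -> run s' ps = Some (d, g))].
Proof.
elim/last_ind: ps => [|ps p IH].
  by move=> _; exists sdef, 0%N, s0; split.
rewrite all_rcons => /andP[cp /IH [s [d [g [Hr Hg Hi Hs]]]]].
have Heq (s' : Slot) : (forall j : 'I_k, (j < d)%N -> s' j = s j) ->
   [exists j : 'I_k, (j < d)%N && (g (s' j) == p (s' j))] =
   [exists j : 'I_k, (j < d)%N && (g (s j) == p (s j))].
  move=> H; apply: eq_existsb => j; case jd: (j < d)%N => //=; by rewrite H.
case M: [exists j : 'I_k, (j < d)%N && (g (s j) == p (s j))].
  exists s, d, g; split => //.
  - by rewrite run_rcons Hr /= M.
  - by move=> s' H; rewrite run_rcons (Hs s' H) /= Heq // M.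
case/existsP: cp => i /eqP ci.
have dk : (d < k)%N.
  rewrite ltn_neqAle (run_dk Hr) andbT; apply/negP => /eqP dk.
  have sinj : injective s.
    by move=> j j'; apply: Hi; rewrite dk ltn_ord.
  have [j sj] : exists j, s j = i.
    have /injF_bij [f sf fs] := sinj.
    by exists (f i); rewrite fs.
  move/negbT/existsPn: M => /(_ j); rewrite dk ltn_ord /= Hg ?dk ?ltn_ord // sj ci eqxx //.
set j0 := Ordinal dk.
set s' : Slot := [ffun j => if j == j0 then i else s j].
have s'lt (j : 'I_k) : (j < d)%N -> s' j = s j.
  by move=> jd; rewrite ffunE; case: eqP => // jj; rewrite jj /= ltnn in jd.
have s'j0 : s' j0 = i by rewrite ffunE eqxx.
have Hstep (s2 : Slot) : (forall j : 'I_k, (j < d.+1)%N -> s2 j = s' j) ->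
    run s2 (rcons ps p) = Some (d.+1, setc g i p).
  move=> H.
  have H' : forall j : 'I_k, (j < d)%N -> s2 j = s j.
    by move=> j jd; rewrite H ?s'lt // ltnW.
  rewrite run_rcons (Hs s2 H') /stepN Heq // M pick_ord (H j0 (ltnSn d)) s'j0 //.
exists s'; exists d.+1; exists (setc g i p); split.
- exact: Hstep.
- move=> j; rewrite ltnS leq_eqVlt => /orP[/eqP jd|jd].
    have -> : j = j0 by apply: val_inj.
    by rewrite s'j0 ffunE eqxx ci.
  rewrite s'lt // ffunE; case: eqP => [->|_]; first by rewrite ci.
  exact: Hg.
- have Mn := negbT M; move/existsPn: Mn => Mn.
  have key (j : 'I_k) : (j < d)%N -> s j != i.
    move=> jd; apply/eqP => sj; move: (Mn j); rewrite jd /= Hg // sj ci eqxx //.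
  move=> j j'; rewrite !ltnS => jd1 jd2.
  move: jd1 jd2; rewrite leq_eqVlt => /orP[/eqP jd|jd]; rewrite leq_eqVlt => /orP[/eqP jd'|jd'].
  + by move=> _; apply: val_inj; rewrite /= jd jd'.
  + have -> : j = j0 by apply: val_inj.
    by rewrite s'j0 s'lt // => /esym/eqP; rewrite (negbTE (key _ jd')).
  + have -> : j' = j0 by apply: val_inj.
    by rewrite s'j0 s'lt // => /eqP; rewrite (negbTE (key _ jd)).
  + by rewrite !s'lt //; apply: Hi.
- exact: Hstep.
Qed.

Lemma serves_alive c ps : all (serves c) ps -> exists s, alive s ps.
Proof. by case/inv_ex => s [d [g [Hr _ _ _]]]; exists s; rewrite /alive Hr. Qed.

Lemma reset_noserve c hr r : isreset hr r -> ~~ all (serves c) (rcons (phase hr) r).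
Proof.
move=> /existsPn H; apply/negP => /serves_alive [s Hs].
by have := H s; rewrite Hs.
Qed.

End Alg.

Section Opt.
Variables (k : nat) (n : 'I_k -> nat) (s0 : config n).
Local Notation run := (run s0).
Local Notation alive := (alive s0).
Local Notation stepP := (stepP s0).
Local Notation phase := (phase s0).
Local Notation isreset := (isreset s0).

Fixpoint Rc (hr rest : seq (config n)) : nat :=
  if rest is r :: rest' then (isreset hr r + Rc (rcons hr r) rest')%N else 0%N.

Lemma Rc_le hr rest : (Rc hr rest <= size rest)%N.
Proof.
elim: rest hr => //= r rest IH hr.
by rewrite -addn1 addnC leq_add // ?IH // leq_b1.
Qed.

Lemma dist_ge (o o' : config n) : ((o != o') <= dist o o')%N.
Proof.
have [->|ne] := eqVneq o o'; first by [].
rewrite /dist card_gt0; apply/set0Pn.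
have [i Hi] : exists i, o i != o' i.
  apply/existsP; apply: contraNT ne => /existsPn H; apply/eqP/ffunP => i.
  by move: (H i); rewrite negbK => /eqP.
by exists i; rewrite inE.
Qed.

Lemma dist0 (o : config n) : dist o o = 0%N.
Proof. by rewrite /dist; apply/eqP; rewrite cards_eq0; apply/eqP/setP => i; rewrite !inE eqxx. Qed.

Lemma opt_inv rest : forall hr (o : config n) cs, all2 (fun c r => serves c r) cs rest ->
  (Rc hr rest <= path_cost o cs + ~~ all (serves o) (phase hr))%N.
Proof.
elim: rest => [|r rest IH] hr o [|o' cs] //=.
case/andP => so' /(IH (rcons hr r) o') H.
rewrite -addnA (leq_trans (leq_add (leqnn _) H)) // !(addnCA _ (path_cost o' cs)) leq_add2l.
rewrite phase_rcons /isreset /stepP.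
case E: [exists s, alive s (rcons (phase hr) r)] => /=.
- have [eoo|ne] := eqVneq o o'.
    by subst o'; rewrite dist0 all_rcons so'.
  rewrite add0n (leq_trans _ (leq_addr _ _)) // (leq_trans _ (dist_ge _ _)) //= ne.
  by case: (all _ _).
- rewrite so' /= addn0.
  have [eoo|ne] := eqVneq o o'.
    subst o'; have := @reset_noserve _ _ s0 o hr r.
    rewrite /isreset E all_rcons so' /= => /(_ isT) ->.
    by rewrite dist0.
  by rewrite (leq_trans _ (leq_addr _ _)) // (leq_trans _ (dist_ge _ _)) // ne.
Qed.

Lemma Rc_OPT I : (Rc [::] I <= OPT s0 I)%N.
Proof.
rewrite /OPT; apply: (big_ind (fun x => Rc [::] I <= x)%N).
- exact: Rc_le.
- by move=> x y Hx Hy; rewrite leq_min Hx Hy.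
- move=> t Ht; have := opt_inv [::] s0 Ht.
  by rewrite addn0.
Qed.

End Opt.

Section Cost.
Variables (k : nat) (n : 'I_k -> nat) (s0 : config n).
Local Notation run := (run s0).
Local Notation alive := (alive s0).
Local Notation stepP := (stepP s0).
Local Notation phase := (phase s0).
Local Notation isreset := (isreset s0).
Local Notation Aset := (Aset s0).
Local Notation chosen := (chosen s0).
Local Notation st := (st s0).
Local Notation nxt := (nxt s0).
Local Notation setc := (@setc k n).
Local Notation over := (@over k n).

Definition Phi rho hr := (k - (st rho hr).1)%N.
Definition sw rho (hr : seq (config n)) r :=
  [|| hr == [::], isreset hr r | chosen rho (rcons hr r) != chosen rho hr].
Fixpoint SW rho (hr rest : seq (config n)) : nat :=
  if rest is r :: rest' then (sw rho hr r + SW rho (rcons hr r) rest')%N else 0%N.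
Definition Inv rho hr (c : config n) := over (chosen rho hr) c (st rho hr).1 (st rho hr).2 = c.

Lemma st_dk rho hr : ((st rho hr).1 <= k)%N.
Proof. rewrite /st; case E: run => [[d g]|] //=; exact: run_dk E. Qed.

Lemma dist_le_k (c c' : config n) : (dist c c' <= k)%N.
Proof. by rewrite /dist (leq_trans (max_card _)) // card_ord. Qed.

Lemma dist_behead s c d g (j : 'I_k) r : over s c d g = c -> val j = d ->
  (dist c (over s c d.+1 (setc g (s j) r)) <= 1)%N.
Proof.
move=> Hc jd; rewrite /dist -(cards1 (s j)); apply: subset_leq_card.

apply/fintype.subsetP => i; rewrite !inE => Hi; apply/eqP; apply: contraNeq Hi => ne.
rewrite /over ffunE; case: existsP => [[j' /andP [j'd /eqP sj']]|_]; last by rewrite eqxx.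
rewrite /setc ffunE (negbTE ne).
have j'j : j' != j by apply: contraNneq ne => e; rewrite -sj' e.
have j'd' : (j' < d)%N.
  rewrite ltn_neqAle -ltnS j'd andbT; apply: contraNneq j'j => e.
  by apply/eqP/val_inj; rewrite /= e jd.
rewrite -{1}Hc /over ffunE; case: existsP => [_|H]; first by rewrite eqxx.
by exfalso; apply: H; exists j'; rewrite j'd' sj' eqxx.
Qed.

Lemma step_ineq (k0 : (0 < k)%N) rho hr r hc : Inv rho hr (last s0 hc) ->
  (dist (last s0 hc) (nxt rho (rcons hr r) hc) + Phi rho (rcons hr r) <= Phi rho hr + 2 * k * sw rho hr r)%N.
Proof.
move=> Hinv.
case Esw: (sw rho hr r).
  have := dist_le_k (last s0 hc) (nxt rho (rcons hr r) hc).
  rewrite /Phi; lia.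
move: Esw; rewrite /sw => /norP [hr0 /norP [/negPn Ereset /negPn /eqP Ech]].
rewrite muln0 addn0.
have Eph : phase (rcons hr r) = rcons (phase hr) r.
  by rewrite phase_rcons /stepP; move: Ereset; rewrite /isreset => ->.
have Hal : alive (chosen rho hr) (rcons (phase hr) r).
  have := first_in rho (Aset_neq0 s0 k0 (rcons hr r)).
  by rewrite -/(chosen rho (rcons hr r)) Ech inE Eph.
move: Hal Hinv; rewrite /nxt /Phi /Inv /st Ech Eph /alive run_rcons.
set s := chosen rho hr.
case E: (run s (phase hr)) => [[d g]|] //=.
case: ifP => [_ _ ->|_]; first by rewrite dist0.
case: pickP => [j /eqP jd _ Hc /=|//].
have dk : (d < k)%N by rewrite -jd ltn_ord.
have := dist_behead r Hc jd; lia.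
Qed.

Lemma cost_bound (k0 : (0 < k)%N) rho rest : forall hr hc, Inv rho hr (last s0 hc) ->
  (path_cost (last s0 hc) (gcont nxt rho hr hc rest) <= Phi rho hr + 2 * k * SW rho hr rest)%N.
Proof.
elim: rest => [|r rest IH] hr hc Hinv /=; first exact: leq0n.
have H1 := step_ineq k0 r Hinv.
have H2 := IH (rcons hr r) (rcons hc (nxt rho (rcons hr r) hc)).
rewrite last_rcons in H2.
have H3 : Inv rho (rcons hr r) (nxt rho (rcons hr r) hc) by rewrite /Inv /nxt over_idem.
move: (H2 H3) H1; rewrite mulnDr.
set x := (2 * k * sw rho hr r)%N; set y := (2 * k * SW rho (rcons hr r) rest)%N; clearbody x y.
move=> A B; apply: (leq_trans (leq_add (leqnn _) A)); by rewrite !addnA leq_add2r.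
Qed.

End Cost.

Section Prob.
Variable (k : nat).
Local Notation Om := {perm (Slot k)}.
Local Notation first := (@first k).

Lemma head_filter_sub (T : eqType) (a b : pred T) d l :
  (forall x, b x -> a x) -> has a l -> b (head d (seq.filter a l)) ->
  head d (seq.filter b l) = head d (seq.filter a l).
Proof.
move=> ba; elim: l => //= x l IH.
case ax: (a x) => /=.
  by move=> _ bx; rewrite bx.
move=> hl hb; have -> : b x = false by apply: contraFF (ba x) ax.
exact: IH.
Qed.

Lemma first_sub rho (A B : {set Slot k}) : B \subset A -> A != finset.set0 ->
  first rho A \in B -> first rho B = first rho A.
Proof.
move=> /fintype.subsetP BA /set0Pn [x xA] H.
rewrite /first; apply: head_filter_sub; first by move=> y; apply: BA.
  2: exact: H.
apply/hasP; exists x => //; apply/mapP; exists (rho^-1 x)%g.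
  by rewrite mem_enum.
by rewrite permKV.
Qed.

Lemma first_tperm rho (A : {set Slot k}) a a' : a \in A -> a' \in A ->
  A != finset.set0 -> first (rho * tperm a a')%g A = tperm a a' (first rho A).
Proof.
move=> aA a'A /set0Pn [x xA].
set t := tperm a a'.
have tA y : (t y \in A) = (y \in A).
  by rewrite /t; case: tpermP => [->|->|//]; rewrite ?aA ?a'A.
rewrite /first.
have -> : [seq (rho * t)%g y | y <- enum (Slot k)] = [seq t y | y <- [seq rho y | y <- enum (Slot k)]].
  by rewrite -map_comp; apply: eq_map => y /=; rewrite permM.
rewrite filter_map.
have -> : [seq y <- [seq rho y | y <- enum (Slot k)] | preim t (mem A) y] =
          [seq y <- [seq rho y | y <- enum (Slot k)] | y \in A].
  by apply: eq_filter => y /=; rewrite tA.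
have : has (mem A) [seq rho y | y <- enum (Slot k)].
  apply/hasP; exists x => //; apply/mapP; exists (rho^-1 x)%g.
    by rewrite mem_enum.
  by rewrite permKV.
rewrite has_filter.
by case: (seq.filter _ _).
Qed.

Lemma first_count (A : {set Slot k}) a : a \in A ->
  (#|[set rho : Om | first rho A == a]| * #|A| = #|Om|)%N.
Proof.
move=> aA.
have An : A != finset.set0 by apply/set0Pn; exists a.
have Ceq a' : a' \in A -> #|[set rho : Om | first rho A == a']| = #|[set rho : Om | first rho A == a]|.
  move=> a'A.
  rewrite -(card_imset _ (mulIg (tperm a a'))).
  apply: eq_card => rho; rewrite inE.
  apply/imsetP/eqP => [[rho' ]|E].
    by rewrite inE => /eqP E ->; rewrite first_tperm // E tpermR.
  exists (rho * tperm a a')%g.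
    by rewrite inE first_tperm // E tpermL.
  by rewrite -mulgA tperm2 mulg1.
have -> : #|Om| = (\sum_(b in A) #|[set rho : Om | first rho A == b]|)%N.
  rewrite -sum1_card (partition_big (fun rho => first rho A) (mem A)) /=; last first.
    by move=> rho _; apply: first_in.
  apply: eq_bigr => b _; rewrite -sum1_card; apply: eq_bigl => rho; by rewrite inE.
rewrite (eq_bigr (fun _ => #|[set rho : Om | first rho A == a]|)); last by move=> b bA; apply: Ceq.
by rewrite sum_nat_const mulnC.
Qed.

End Prob.

Lemma ln_ineq (R : realType) (a b : R) : 0 < b -> b <= a -> (a - b) / a <= ln a - ln b.
Proof.
move=> b0 ba; have a0 : 0 < a by apply: lt_le_trans ba.
have := expR_ge1Dx (ln (b / a)).
rewrite lnK ?posrE ?divr_gt0 // ln_div ?posrE // => H.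
have -> : (a - b) / a = 1 - b / a by rewrite mulrBl divff ?gt_eqF.
lra.
Qed.

Lemma ln_ge_half (R : realType) (k : nat) : (2 <= k)%N -> 1 <= k%:R * ln (k%:R : R).
Proof.
move=> k2.
have k1 : (1 : R) <= k%:R by rewrite ler1n; apply: leq_trans k2.
have := ln_ineq (ltr01 : (0:R) < 1) k1; rewrite ln1 subr0 => H.
have k0 : (0 : R) < k%:R by apply: lt_le_trans k1.
have : k%:R * ((k%:R - 1) / k%:R) <= k%:R * ln (k%:R : R) by rewrite ler_pM2l.
rewrite mulrCA divff ?gt_eqF // mulr1.
have : (2 : R) <= k%:R by rewrite (ler_nat R 2 k).
lra.
Qed.

Lemma sum_ind (R : realType) (T : finType) (P : pred T) :
  \sum_(x : T) (P x)%:R = #|[set x | P x]|%:R :> R.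
Proof.
rewrite (bigID P) /= [X in _ + X]big1 ?addr0; last by move=> x /negbTE ->.
rewrite (eq_bigr (fun _ => 1)); last by move=> x ->.
rewrite sumr_const; congr (_%:R); apply: eq_card => x; by rewrite inE.
Qed.

Section Exp.
Variables (R : realType) (k : nat) (n : 'I_k -> nat) (s0 : config n).
Local Notation Om := {perm (Slot k)}.
Local Notation first := (@first k).
Local Notation run := (run s0).
Local Notation alive := (alive s0).
Local Notation stepP := (stepP s0).
Local Notation phase := (phase s0).
Local Notation isreset := (isreset s0).
Local Notation Aset := (Aset s0).
Local Notation chosen := (chosen s0).
Local Notation st := (st s0).
Local Notation nxt := (nxt s0).
Local Notation sw := (sw s0).
Local Notation SW := (SW s0).
Local Notation Rc := (Rc s0).

Lemma first_prob (A B : {set Slot k}) : B \subset A -> A != finset.set0 ->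
  (#|[set rho : Om | first rho A \in B]| * #|A| = #|Om| * #|B|)%N.
Proof.
move=> BA /set0Pn [a aA].
have -> : #|[set rho : Om | first rho A \in B]| = (\sum_(b in B) #|[set rho : Om | first rho A == b]|)%N.
  rewrite -sum1_card (partition_big (fun rho => first rho A) (mem B)) /=; last by move=> rho; rewrite inE.
  apply: eq_bigr => b bB; rewrite -sum1_card; apply: eq_bigl => rho.
  by rewrite !inE; case: eqP => [->|]; rewrite ?bB ?andbF.
rewrite big_distrl /= (eq_bigr (fun _ => #|Om|)); last first.
  by move=> b bB; apply: first_count; exact: (fintype.subsetP BA).
by rewrite sum_nat_const mulnC.
Qed.

Lemma Aset_nil : Aset [::] = [set: Slot k].
Proof. by apply/finset.setP => s; rewrite !inE. Qed.

Lemma phase_one (k0 : (0 < k)%N) r : phase [:: r] = [:: r].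
Proof.
rewrite -[[:: r]]/(rcons [::] r) phase_rcons /stepP /=.
by case: ifP.
Qed.

Lemma Aset_one (k0 : (0 < k)%N) r : Aset [:: r] = [set: Slot k].
Proof. by apply/finset.setP => s; rewrite !inE phase_one // alive_single. Qed.

Lemma isreset_nil (k0 : (0 < k)%N) r : isreset [::] r = false.
Proof.
rewrite /isreset /=; apply/negbF/existsP; exists (sdef k); exact: alive_single.
Qed.

Lemma sw_bound (k0 : (0 < k)%N) hr r :
  \sum_(rho : Om) (sw rho hr r)%:R <=
  #|Om|%:R * (ln #|Aset hr|%:R - ln #|Aset (rcons hr r)|%:R + (hr == [::])%:R
              + (1 + ln #|Slot k|%:R) * (isreset hr r)%:R) :> R.
Proof.
have Apos h : (1 : R) <= #|Aset h|%:R.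
  by rewrite ler1n card_gt0 Aset_neq0.
have Ale h : (#|Aset h|%:R : R) <= #|Slot k|%:R by rewrite ler_nat max_card.
have lnA0 h : 0 <= ln (#|Aset h|%:R : R) by apply: ln_ge0.
have lnAN h : ln (#|Aset h|%:R : R) <= ln #|Slot k|%:R.
  have Ap : (0:R) < #|Aset h|%:R by apply: lt_le_trans (Apos h).
  by rewrite ler_ln ?posrE ?Ap ?(lt_le_trans Ap (Ale h)).
have sw1 rho : (sw rho hr r)%:R <= 1 :> R by case: (sw _ _ _).
have sumle : \sum_(rho : Om) (sw rho hr r)%:R <= #|Om|%:R :> R.
  by apply: le_trans (ler_sum _ (fun rho _ => sw1 rho)) _; rewrite sumr_const.
have Om0 : (0 : R) <= #|Om|%:R by [].
case: (eqVneq hr [::]) => [eh|hr0].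
  subst hr; rewrite Aset_nil /= Aset_one // isreset_nil // subrr add0r mulr0 addr0 mulr1; exact: sumle.
case Er: (isreset hr r).
  apply: (le_trans sumle); rewrite -[X in X <= _]mulr1; apply: ler_wpM2l => //.
  rewrite /= ?mulr0n ?mulr1n ?addr0 ?mulr1.
  have := lnA0 hr; have := lnAN (rcons hr r); lra.
have Eph : phase (rcons hr r) = rcons (phase hr) r.
  by rewrite phase_rcons /stepP; move: Er; rewrite /isreset => /negbFE ->.
set A := Aset hr; set A' := Aset (rcons hr r).
have sub : A' \subset A.
  by apply/fintype.subsetP => s; rewrite !inE Eph => /alive_rcons.
have An : A != finset.set0 by apply: Aset_neq0.
have swD rho : (sw rho hr r)%:R <= (first rho A \in A :\: A')%:R :> R.
  rewrite /sw (negbTE hr0) Er /=.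
  case: (boolP (first rho A \in A :\: A')) => [_|]; first by case: (_ != _).
  rewrite inE first_in // andbT negbK => FA.
  by rewrite /chosen -/A -/A' (first_sub sub An FA) eqxx.
apply: (le_trans (ler_sum _ (fun rho _ => swD rho))).
rewrite sum_ind.
have Hp := first_prob (subsetDl A A') An.
have Dc : #|A :\: A'| = (#|A| - #|A'|)%N by rewrite cardsD (finset.setIidPr sub).
have a0 : (#|A|%:R : R) != 0 by rewrite pnatr_eq0 -lt0n card_gt0.
have cE : (#|[set rho : Om | first rho A \in A :\: A']|%:R : R) =
          #|Om|%:R * ((#|A|%:R - #|A'|%:R) / #|A|%:R).
  have : ((#|[set rho : Om | first rho A \in A :\: A']| * #|A|)%N%:R : R) = (#|Om| * #|A :\: A'|)%N%:R.
    by rewrite Hp.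
  rewrite !natrM Dc natrB ?subset_leq_card // => H.
  by apply/(mulIf a0); rewrite H -mulrA divfK.
rewrite cE; apply: ler_wpM2l => //.
rewrite /= ?mulr0n ?mulr1n ?addr0 ?mulr0. rewrite addr0.
apply: ln_ineq; first exact: lt_le_trans (Apos _).
by rewrite ler_nat subset_leq_card.
Qed.

Lemma SW_sum (k0 : (0 < k)%N) rest : forall hr,
  \sum_(rho : Om) (SW rho hr rest)%:R <=
  #|Om|%:R * (ln #|Aset hr|%:R + (hr == [::])%:R + (1 + ln #|Slot k|%:R) * (Rc hr rest)%:R) :> R.
Proof.
have lnA0 h : 0 <= ln (#|Aset h|%:R : R).
  by apply: ln_ge0; rewrite ler1n card_gt0 Aset_neq0.
have lnN0 : 0 <= ln (#|Slot k|%:R : R).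
  by apply: ln_ge0; rewrite ler1n; apply/card_gt0P; exists (sdef k).
elim: rest => [|r rest IH] hr /=.
  rewrite big1 // mulr0 addr0; apply: mulr_ge0 => //.
  by apply: addr_ge0 => //.
under eq_bigr do rewrite natrD.
rewrite big_split /=.
apply: le_trans (lerD (sw_bound k0 hr r) (IH (rcons hr r))) _.
rewrite -mulrDr; apply: ler_wpM2l => //.
have -> : (rcons hr r == [::]) = false by case: hr.
rewrite natrD /= ?mulr0n ?addr0.
set X := 1 + ln _; set Y := ln _; set Z := ln _.
lra.
Qed.

End Exp.

Lemma over0 (k : nat) (n : 'I_k -> nat) (s : Slot k) (c g : config n) : over s c 0 g = c.
Proof.
apply/ffunP => i; rewrite ffunE; case: existsP => // [[j]] //.
Qed.

Local Notation OmT k := {perm (Slot k)}.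

Theorem corollary7 (R : realType) :
  exists C : R, forall k : nat, (2 <= k)%N ->
  forall n : 'I_k -> nat, (forall i, 2 <= n i)%N ->
  forall s0 : config n,
  exists A : ralg R n, valid_ralg A /\
    competitive A s0 (C * (k%:R) ^+ 2 * ln (k%:R)).
Proof.
exists 4 => k k2 n _ s0.
have k0 : (0 < k)%N by apply: leq_trans k2.
exists (galg R (nxt s0) s0 (1%g : (OmT k))).
split; first by apply: galg_valid => w hr r hc; apply: nxt_serves.
set L := k%:R * ln (k%:R : R).
have L1 : 1 <= L by apply: ln_ge_half.
exists (k%:R + 2 * k%:R * (1 + L)) => I.
have Hg : gcons (nxt s0) s0 [::] [:: s0] = [set: (OmT k)] by apply/finset.setP => w; rewrite /gcons !inE /ghist /= eqxx.
have Om0 : (0 < #|[set: (OmT k)]|)%N by rewrite cardsT; apply/card_gt0P; exists 1%g.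
have E := @galg_ecost R _ _ _ (nxt s0) s0 1%g I [::] [:: s0].
rewrite Hg in E; have {E} E := E Om0.
have lnN : ln (#|Slot k|%:R : R) = L.
  rewrite card_ffun card_ord natrX lnXn ?ltr0n // /L mulr_natl //.
have Hc w : ((path_cost (last s0 [:: s0]) (gcont (nxt s0) w [::] [:: s0] I))%:R : R) <=
            k%:R + 2 * k%:R * (SW s0 w [::] I)%:R.
  have H := @cost_bound _ _ s0 k0 w I [::] [:: s0].
  have Hinv : Inv s0 w [::] (last s0 [:: s0]).
    by rewrite /Inv /st /= over0.
  have := H Hinv; rewrite -(ler_nat R) natrD natrM natrM /Phi => H'.
  apply: le_trans H' _; rewrite lerD2r ler_nat; exact: leq_subr.
have HS := SW_sum R s0 k0 I [::].
rewrite Aset_nil cardsT lnN /= in HS.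
have HO : ((Rc s0 [::] I)%:R : R) <= (OPT s0 I)%:R by rewrite ler_nat Rc_OPT.
set O := (OPT s0 I)%:R in HO *.
set e := expected_cost _ s0 I.
set N := #|[set: (OmT k)]|%:R in E.
have N0 : (0 : R) < N by rewrite ltr0n.
have HN : #|(OmT k)|%:R = N by rewrite /N cardsT.
rewrite HN in HS.
have Hsum : e * N <= N * (k%:R + 2 * k%:R * (L + 1 + (1 + L) * O)).
  rewrite /e /expected_cost E.
  apply: le_trans (ler_sum _ (fun w _ => Hc w)) _.
  rewrite big_split /= sumr_const -mulr_sumr.
  rewrite mulrDr -/N.
  have L0 : 0 <= 1 + L by lra.
  have k0R : (0 : R) <= 2 * k%:R by rewrite mulr_ge0 // ler0n.
  rewrite [X in X + _ <= _](_ : _ = N * k%:R); last by rewrite /N mulr_natl.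
  rewrite lerD2l (eq_bigl xpredT); last by move=> i; rewrite inE.
  apply: le_trans (ler_wpM2l k0R HS) _.
  rewrite mulrCA; apply: ler_wpM2l; first exact: ltW.
  apply: ler_wpM2l => //; rewrite lerD2l; exact: ler_wpM2l.
have He : e <= k%:R + 2 * k%:R * (L + 1 + (1 + L) * O).
  by rewrite -(ler_pM2r N0) [X in _ <= X]mulrC.
have -> : 4 * k%:R ^+ 2 * ln (k%:R : R) = 4 * k%:R * L by rewrite /L expr2 !mulrA.
have O0 : 0 <= O by rewrite /O ler0n.
have kR : (0 : R) <= k%:R by rewrite ler0n.
have L1' : 0 <= L - 1 by rewrite subr_ge0.
have := mulr_ge0 (mulr_ge0 kR O0) L1'.
nra.
Qed.
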